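(* For every integer $n\ge 3$, $\chi_{ei}(W_n)=n+1$.
   Context: All graphs are finite and simple. The wheel $W_n$ is the graph on $n+1$ vertices obtained from the cycle $C_n$ by adding one new vertex adjacent to all vertices of the cycle. A path $P_4$ in $G$ is a sequence $uxyv$ of four distinct vertices with $ux,xy,yv\in E(G)$; $u,v$ are its end vertices. An $e$-injective $k$-coloring of $G$ is a function $f:V(G)\to\{1,\dots,k\}$ with $f(u)\ne f(v)$ whenever $u,v$ are the end vertices of some path $P_4$ in $G$; $\chi_{ei}(G)$ is the least such $k$. *)

(* Defs.v *)
From mathcomp Require Import all_boot.
Set Implicit Arguments. Unset Strict Implicit. Unset Printing Implicit Defensive.

Definition simple_graph (T : finType) (e : rel T) : Prop :=
  irreflexive e /\ symmetric e.

Definition is_P4 (T : finType) (e : rel T) (u x y v : T) : bool :=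
  [&& uniq [:: u; x; y; v], e u x, e x y & e y v].

Definition ei_coloring (T : finType) (e : rel T) (k : nat) (f : T -> 'I_k) : bool :=
  [forall u, forall x, forall y, forall v, is_P4 e u x y v ==> (f u != f v)].

Definition has_ei_coloring (T : finType) (e : rel T) (k : nat) : bool :=
  [exists f : {ffun T -> 'I_k}, ei_coloring e f].

Lemma has_ei_coloring_card (T : finType) (e : rel T) :
  exists k, has_ei_coloring e k.
Proof.
exists #|T|; apply/existsP; exists [ffun x => enum_rank x].
apply/forallP=> u; apply/forallP=> x; apply/forallP=> y; apply/forallP=> v.
apply/implyP=> /andP [Hu _]; rewrite !ffunE.
apply/negP=> /eqP /enum_rank_inj Huv; move: Hu; rewrite Huv /=.
by rewrite !inE eqxx !orbT.
Qed.

Definition chi_ei (T : finType) (e : rel T) : nat :=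
  ex_minn (has_ei_coloring_card e).

Definition cycle_adj (n i j : nat) : bool :=
  (i != j) && ((j == (i.+1 %% n)) || (i == (j.+1 %% n))).

(* Wheel W_n on 'I_n.+1: vertices 0..n-1 form C_n, vertex n is the hub
   adjacent to every cycle vertex. *)
Definition wheel (n : nat) : rel (ordinal n.+1) :=
  fun i j => if (i < n) && (j < n) then cycle_adj n i j else i != j.
Arguments wheel n : clear implicits.

(* Main.v *)
Require Import Defs.
From mathcomp Require Import all_boot zify.
Set Implicit Arguments.
Unset Strict Implicit.

Section W.
Variable n : nat.
Hypothesis n3 : 3 <= n.

Definition sc i := if i.+1 == n then 0 else i.+1.
Definition pc i := if i == 0 then n.-1 else i.-1.
Definition wn (i j : nat) := if (i < n) && (j < n) then cycle_adj n i j else i != j.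

Lemma sc_spec i : i < n -> (i.+1 < n /\ sc i = i.+1) \/ (i.+1 = n /\ sc i = 0).
Proof. move=> h; rewrite /sc; case: eqP => e; [right|left]; lia. Qed.

Lemma pc_spec i : i < n -> (0 < i /\ pc i = i.-1) \/ (i = 0 /\ pc i = n.-1).
Proof. move=> h; rewrite /pc; case: eqP => e; [right|left]; lia. Qed.

Lemma sc_mod i : i < n -> i.+1 %% n = sc i.
Proof.
move=> h; case: (sc_spec h) => [[h1 ->]|[h1 ->]]; first by rewrite modn_small.
by rewrite h1 modnn.
Qed.

Lemma adj_s i : i < n -> wn i (sc i) /\ wn (sc i) i.
Proof.
move=> h; have h2 := sc_spec h; rewrite /wn /cycle_adj sc_mod //.
have -> : sc i < n by lia.
rewrite h /= eqxx /= orbT; split; lia.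
Qed.

Lemma hub i : i < n -> wn n i /\ wn i n.
Proof. move=> h; rewrite /wn ltnn /= andbF; split; lia. Qed.

Lemma P4_nat a b : a <= n -> b <= n -> a != b ->
  exists x y, [&& x <= n, y <= n, uniq [:: a; x; y; b], wn a x, wn x y & wn y b].
Proof.
move=> ha hb hab.
have [an|an] : a = n \/ a < n by lia.
  have bn : b < n by lia.
  have s1 := sc_spec bn.
  have sbn : sc b < n by lia.
  have s2 := sc_spec sbn.
  exists (sc (sc b)), (sc b).
  have [e1 e2] := adj_s bn; have [e3 e4] := adj_s sbn; have ssn : sc (sc b) < n by lia.
  have [e5 _] := hub ssn.
  rewrite an e5.
  rewrite e4 e2 /= !inE; lia.
have [bn|bn] : b = n \/ b < n by lia.
  have s1 := sc_spec an.
  have san : sc a < n by lia.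
  have s2 := sc_spec san.
  exists (sc a), (sc (sc a)).
  have [e1 e2] := adj_s an; have [e3 e4] := adj_s san; have ssn : sc (sc a) < n by lia.
  have [_ e5] := hub ssn.
  rewrite bn e5.
  rewrite e1 e3 /= !inE; lia.
have [e1 e2] := hub bn.
case: (eqVneq (sc b) a) => hs.
  have s1 := pc_spec bn.
  have pbn : pc b < n by lia.
  have s2 := sc_spec pbn.
  have es : sc (pc b) = b by lia.
  have [e3 e4] := adj_s pbn; rewrite es in e3 e4.
  have [e5 e6] := hub pbn; have [e7 e8] := hub an.
  have s3 := sc_spec bn.
  exists n, (pc b); rewrite e8 e5 e3 /= !inE; lia.
have s3 := sc_spec bn.
have sbn : sc b < n by lia.
have [e3 e4] := adj_s bn.
have [e5 e6] := hub sbn; have [e7 e8] := hub an.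
exists n, (sc b); rewrite e8 e5 e4 /= !inE; lia.
Qed.
End W.

Lemma wheelE (n : nat) (i j : 'I_n.+1) : wheel n i j = wn n i j.
Proof. by []. Qed.

Lemma P4_ord n (a b : 'I_n.+1) : 3 <= n -> a != b ->
  exists x y, is_P4 (wheel n) a x y b.
Proof.
move=> n3 hab.
have [x [y /andP [hx /andP [hy /andP [hu /andP [h1 /andP [h2 h3]]]]]]] :=
  P4_nat n3 (ltn_ord a : a <= n) (ltn_ord b : b <= n) hab.
exists (inord x), (inord y).
rewrite /is_P4 !wheelE !inordK // h1 h2 h3 !andbT.
move: hu; rewrite /= !inE -!val_eqE /= !inordK //.
Qed.

Theorem proposition3p4 (n : nat) : 3 <= n -> chi_ei (wheel n) = n.+1.
Proof.
move=> n3; rewrite /chi_ei; case: ex_minnP => m hm hmin.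
apply/eqP; rewrite eqn_leq; apply/andP; split.
  apply: hmin; apply/existsP; exists [ffun x => x].
  apply/forallP=> u; apply/forallP=> x; apply/forallP=> y; apply/forallP=> v.
  apply/implyP=> /andP [Hu _]; rewrite !ffunE.
  by move: Hu => /= /and4P [/negP + _ _ _]; rewrite !inE => H; apply/negP => /eqP E; apply: H; rewrite E eqxx !orbT.
case/existsP: hm => f /forallP hf.
have inj : injective f.
  move=> a b eab; apply/eqP; apply/negPn/negP => hab.
  have [x [y hp]] := P4_ord n3 hab.
  by move: (hf a) => /forallP /(_ x) /forallP /(_ y) /forallP /(_ b) /implyP /(_ hp); rewrite eab eqxx.
by have := leq_card f inj; rewrite !card_ord.
Qed.
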